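(* Let $X$ be a $T_1$ space and $\mathcal{P}$ an ideal of closed subsets of $X$. Then $C(X)_\mathcal{P}$ is a regular ring (for every $f$ there is $g$ with $f=f^2g$) if and only if for every $Z\in Z_\mathcal{P}[X]$ there exists $P\in\mathcal{P}$ such that $Z\setminus P$ is a clopen subset of the subspace $X\setminus P$.
   Context: An ideal of closed subsets of $X$ is a family $\mathcal{P}$ of closed subsets closed under finite unions and under passing to closed subsets. $D_f$ is the set of discontinuity points of $f\in\mathbb{R}^X$; $C(X)_\mathcal{P}=\{f\in\mathbb{R}^X\colon\overline{D_f}\in\mathcal{P}\}$ with pointwise operations. For $f\in C(X)_\mathcal{P}$, $Z_\mathcal{P}(f)=\{x\colon f(x)=0\}$ and $Z_\mathcal{P}[X]$ is the set of all such zero sets. *)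

(* Defs.v *)
From HB Require Import structures.
From mathcomp Require Import all_boot all_order all_algebra.
From mathcomp Require Import all_classical all_reals all_analysis.
Set Implicit Arguments. Unset Strict Implicit. Unset Printing Implicit Defensive.
Import Order.TTheory GRing.Theory Num.Theory.
Import numFieldNormedType.Exports.
Local Open Scope classical_set_scope.
Local Open Scope ring_scope.

Definition closed_ideal {X : topologicalType} (P : set (set X)) : Prop :=
  [/\ (forall A, P A -> closed A),
      P set0,
      (forall A B, P A -> P B -> P (A `|` B)) &
      (forall A B, P A -> closed B -> B `<=` A -> P B)].

Definition discont {X : topologicalType} {R : realType} (f : X -> R) : set X :=
  [set x | ~ {for x, continuous f}].

Definition in_CP {X : topologicalType} {R : realType}
  (P : set (set X)) (f : X -> R) : Prop :=
  P (closure (discont f)).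

Definition CP_regular {X : topologicalType} {R : realType}
  (P : set (set X)) : Prop :=
  forall f : X -> R, in_CP P f ->
    exists g : X -> R, in_CP P g /\ f = (f \* f) \* g.

Definition zero_set {X : Type} {R : realType} (f : X -> R) : set X :=
  [set x | f x = 0].

Definition zero_sets_P {X : topologicalType} {R : realType}
  (P : set (set X)) : set (set X) :=
  [set Z | exists f : X -> R, in_CP P f /\ Z = zero_set f].

Definition clopen_in {X : topologicalType} (S D : set X) : Prop :=
  (exists U : set X, open U /\ S = U `&` D) /\
  (exists C : set X, closed C /\ S = C `&` D).

(* Main.v *)
Require Import Defs.
From mathcomp Require Import all_boot all_order all_algebra.
From mathcomp Require Import all_classical all_reals all_analysis.
Local Open Scope classical_set_scope.
Local Open Scope ring_scope.
Import Order.TTheory GRing.Theory Num.Theory.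
Import numFieldNormedType.Exports.

Section Helpers.
Variables (R : realType) (X : topologicalType).

Lemma cont_loc (f g : X -> R) (x : X) :
  nbhs x [set y | f y = g y] -> {for x, continuous f} -> {for x, continuous g}.
Proof.
move=> Hn cf.
have gx : f x = g x by exact: (nbhs_singleton Hn).
rewrite /prop_for /continuous_at -gx.
apply: cvg_trans cf.
apply: near_eq_cvg.
by near=> y; rewrite (near Hn y).
Unshelve. all: by end_near.
Qed.

Lemma open_pre (A : set X) (h : X -> R) (V : set R) :
  closed A -> open V -> (forall x, ~ A x -> {for x, continuous h}) ->
  open [set x | ~ A x /\ V (h x)].
Proof.
move=> cA oV ch; rewrite openE => x [nAx Vhx].
have n1 : nbhs x (~` A) by apply: open_nbhs_nbhs; split => //; exact: closed_openC.
have n2 : nbhs x (h @^-1` V).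
  have := ch x nAx; move/(_ V); apply.
  by apply: open_nbhs_nbhs; split.
rewrite /interior /=.
by apply: filterS (filterI n1 n2) => y [].
Qed.

Lemma notin_cl_cont (f : X -> R) (x : X) :
  ~ closure (discont f) x -> {for x, continuous f}.
Proof.
move=> H; apply: contrapT => nc; apply: H; apply: subset_closure; exact: nc.
Qed.

End Helpers.

Theorem theorem6p4 (R : realType) (X : topologicalType) (P : set (set X)) :
  accessible_space X -> closed_ideal P ->
  (@CP_regular X R P <->
   forall Z, @zero_sets_P X R P Z ->
     exists A, P A /\ clopen_in (Z `\` A) (~` A)).
Proof.
move=> _ [Pcl P0 PU PS]; split.
- move=> reg Z [f [Pf ->]].
  have [g [Pg fE]] := reg f Pf.
  set A := closure (discont f) `|` closure (discont g).
  have cA : closed A by apply: closedU; exact: closed_closure.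
  exists A; split; first exact: PU.
  set h := (f \* g)%R.
  have h01 : forall x, (f x = 0 -> h x = 0) /\ (f x != 0 -> h x = 1).
    move=> x; split; first by rewrite /h /= => ->; rewrite mul0r.
    move=> nz; have := congr1 (fun k => k x) fE; rewrite /h /= => e.
    apply: (mulfI nz); rewrite mulr1 mulrA; exact/esym.
  have ch : forall x, ~ A x -> {for x, continuous h}.
    move=> x nA; apply: cvgM.
      by apply: notin_cl_cont => c; apply: nA; left.
    by apply: notin_cl_cont => c; apply: nA; right.
  split.
  + exists [set x | ~ A x /\ [set r : R | (r < 1/2)%R] (h x)]; split.
      apply: open_pre => //; exact: open_lt.
    apply/seteqP; split => x /=.
      move=> [zx nA]; split => //; split => //; rewrite (proj1 (h01 x) zx).
      by rewrite divr_gt0.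
    move=> [[nA hx] _]; split => //; apply/eqP; apply: contraTT hx => nz.
    rewrite (proj2 (h01 x) nz) -leNgt ler_pdivrMr // mul1r ler1n //.
  + exists (~` [set x | ~ A x /\ [set r : R | (1/2 < r)%R] (h x)]); split.
      rewrite -openC setCK; apply: open_pre => //; exact: open_gt.
    apply/seteqP; split => x /=.
      move=> [zx nA]; split => //; move=> [_]; rewrite (proj1 (h01 x) zx).
      by rewrite ltNge divr_ge0.
    move=> [hx nA]; split => //; apply/eqP; apply: contrapT => nz.
    apply: hx; split => //; move/negP: nz => nz.
    rewrite (proj2 (h01 x) nz) ltr_pdivrMr // mul1r ltr1n //.
- move=> H f Pf.
  have [A [PA [[U [oU ZU]] _]]] := H (zero_set f) (ex_intro _ f (conj Pf erefl)).
  set g := fun x => if f x == 0 then 0 else (f x)^-1.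
  exists g; split; last first.
    apply: funext => x; rewrite /g /=; case: ifPn => [/eqP -> |nz].
      by rewrite !mul0r.
    by rewrite -mulrA mulfV // mulr1.
  set B := A `|` closure (discont f).
  have PB : P B by apply: PU.
  have cB : closed B by apply: closedU; [exact: Pcl | exact: closed_closure].
  rewrite /in_CP; apply: (PS B); [exact: PB | exact: closed_closure | ].
  rewrite (closure_id B).1 //; apply: closureS => x dx.
  apply: contrapT => nB; apply: dx.
  have nA : ~ A x by move=> a; apply: nB; left.
  have cf : {for x, continuous f} by apply: notin_cl_cont => c; apply: nB; right.
  have [/eqP fx | nz] := boolP (f x == 0).
    apply: (@cont_loc R X (fun _ => 0)); last exact: cst_continuous.
    have : nbhs x (U `&` ~` A).
      apply: open_nbhs_nbhs; split.
        apply: openI => //; apply: closed_openC; exact: Pcl.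
      have : (zero_set f `\` A) x by split.
      by rewrite ZU.
    apply: filterS => y Uy; rewrite /g.
    have : (zero_set f `\` A) y by rewrite ZU.
    by move=> [/= -> _]; rewrite eqxx.
  apply: (@cont_loc R X (fun y => (f y)^-1)%R); last first.
    by apply: cvgV.
  have : nbhs x [set y | f y != 0%R].
    have := cf [set r : R | r != 0%R]; apply.
    apply: open_nbhs_nbhs; split => //; exact: open_neq.
  by apply: filterS => y /= nzy; rewrite /g (negbTE nzy).
Qed.
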